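(* Let $\mathfrak{g}=sl(n)$, $G=GL(n)$ acting by conjugation, and let $r_{BD}$ be any Belavin–Drinfeld $r$-matrix for $sl(n,\overline{\mathbb{K}})$ (with respect to the diagonal Cartan subalgebra and upper triangular Borel). Then $C(r_{BD})\subseteq\mathrm{diag}(n,\overline{\mathbb{K}})$.
   Context: $\mathbb{K}=\mathbb{C}((\hbar))$, $\overline{\mathbb{K}}$ its algebraic closure. For $sl(n)$: Cartan $\mathfrak{h}$ = traceless diagonal matrices, simple roots $\alpha_i=\epsilon_i-\epsilon_{i+1}$ ($1\le i\le n-1$), root vector $e_{\epsilon_i-\epsilon_k}=e_{ik}$ (matrix unit), $\Omega=\sum_{i,k}e_{ik}\otimes e_{ki}-\frac1nI\otimes I$ with Cartan part $\Omega_0$. An admissible triple $(\Gamma_1,\Gamma_2,\tau)$: $\Gamma_1,\Gamma_2\subset\{\alpha_1,\dots,\alpha_{n-1}\}$, $\tau:\Gamma_1\to\Gamma_2$ an isometric bijection with every $\alpha\in\Gamma_1$ having some $\tau^k(\alpha)\notin\Gamma_1$; $\tau$ extended additively. A Belavin–Drinfeld $r$-matrix is $r_{BD}=r_0+\sum_{\alpha>0}e_\alpha\otimes e_{-\alpha}+\sum_{\beta\in(\mathbb{Z}\Gamma_1)^+}\sum_{k\ge1}e_\beta\wedge e_{-\tau^k(\beta)}$ where $r_0\in\mathfrak{h}(\overline{\mathbb{K}})^{\otimes2}$, $r_0+r_0^{21}=\Omega_0$, $(\tau(\alpha)\otimes1+1\otimes\alpha)(r_0)=0$ for $\alpha\in\Gamma_1$.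 $C(r)=\{X\in GL(n,\overline{\mathbb{K}}):(\mathrm{Ad}_X\otimes\mathrm{Ad}_X)(r)=r\}$, and $\mathrm{diag}(n,\overline{\mathbb{K}})$ is the group of invertible diagonal matrices. *)

(* Defs.v *)
From HB Require Import structures.
From mathcomp Require Import all_boot all_order all_algebra all_field.
Set Implicit Arguments. Unset Strict Implicit. Unset Printing Implicit Defensive.
Import Order.TTheory GRing.Theory Num.Theory.
Local Open Scope ring_scope.

(* Matrix units: e_{ij} = delta_mx i j (indices 0..n-1).                      *)
(* Elements of gl(n) (x) gl(n) are stored by their coefficients in the basis  *)
(* e_{ij} (x) e_{kl}: the coefficient is at index ((i,j),(k,l)).              *)
(* Simple roots: alpha_m = eps_m - eps_{m+1}, indexed by m : 'I_n with        *)
(* m.+1 < n (0-based version of alpha_1..alpha_{n-1}).                        *)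
(* Elements of the root lattice are stored by their coordinates on the        *)
(* simple roots: c : {ffun 'I_n -> int}, c m = coefficient of alpha_m.        *)

Notation tensor F n := {ffun ('I_n * 'I_n) * ('I_n * 'I_n) -> F}.

Section BD.
Variables (F : fieldType) (n : nat).

Definition tens (A B : 'M[F]_n) : tensor F n :=
  [ffun p : ('I_n * 'I_n) * ('I_n * 'I_n) => A p.1.1 p.1.2 * B p.2.1 p.2.2].

Definition wedge (A B : 'M[F]_n) : tensor F n := tens A B - tens B A.

(* (Ad_X (x) Ad_X)(T): the linear extension of
   A (x) B |-> (X A X^-1) (x) (X B X^-1). *)
Definition Ad2 (X : 'M[F]_n) (T : tensor F n) : tensor F n :=
  let Y := invmx X in
  [ffun p : ('I_n * 'I_n) * ('I_n * 'I_n) =>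
     \sum_(a : 'I_n) \sum_(b : 'I_n) \sum_(c : 'I_n) \sum_(d : 'I_n)
       X p.1.1 a * Y b p.1.2 * X p.2.1 c * Y d p.2.2 * T ((a, b), (c, d))].

Definition Cstab (r : tensor F n) (X : 'M[F]_n) : Prop :=
  X \in unitmx /\ Ad2 X r = r.

Definition simple_idx (m : 'I_n) : bool := (m.+1 < n)%N.

(* eps-coordinates of alpha_m:  alpha_m(e_{ii}) *)
Definition alpha_eps (m i : 'I_n) : int :=
  (i == m :> nat)%:Z - (i == m.+1 :> nat)%:Z.

Definition root_form (a b : 'I_n) : int :=
  \sum_(i : 'I_n) alpha_eps a i * alpha_eps b i.

Definition admissible (G1 G2 : {set 'I_n}) (tau : 'I_n -> 'I_n) : Prop :=
  [/\ {in G1, forall m, simple_idx m},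
      {in G2, forall m, simple_idx m},
      {in G1 &, injective tau} /\
      tau @: G1 = G2,
      {in G1 &, forall a b, root_form (tau a) (tau b) = root_form a b}
    & {in G1, forall a, exists k, iter k tau a \notin G1}].

(* the positive root eps_i - eps_j (i < j) = alpha_i + ... + alpha_{j-1},
   in simple-root coordinates *)
Definition posroot (i j : 'I_n) : {ffun 'I_n -> int} :=
  [ffun m : 'I_n => ((i <= m)%N && (m < j)%N)%:Z].

Definition in_lattice (G1 : {set 'I_n}) (c : {ffun 'I_n -> int}) : bool :=
  [forall m, (c m != 0) ==> (m \in G1)].

(* additive extension of tau to Z Gamma1 *)
Definition tau_ext (G1 : {set 'I_n}) (tau : 'I_n -> 'I_n)
    (c : {ffun 'I_n -> int}) : {ffun 'I_n -> int} :=
  [ffun m' : 'I_n => \sum_(m in G1 | tau m == m') c m].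

(* tau^k(c), defined (Some _) iff c, tau c, ..., tau^{k-1} c lie in Z Gamma1 *)
Fixpoint tau_pow (G1 : {set 'I_n}) (tau : 'I_n -> 'I_n) (k : nat)
    (c : {ffun 'I_n -> int}) : option {ffun 'I_n -> int} :=
  match k with
  | 0 => Some c
  | k'.+1 =>
      match tau_pow G1 tau k' c with
      | Some d => if in_lattice G1 d then Some (tau_ext G1 tau d) else None
      | None => None
      end
  end.

(* root vector e_{-gamma} for a positive root gamma = eps_p - eps_q (p < q):
   e_{-gamma} = e_{qp} (zero if gamma is not a positive root) *)
Definition e_neg (g : {ffun 'I_n -> int}) : 'M[F]_n :=
  \sum_(p : 'I_n) \sum_(q : 'I_n | (p < q)%N && (posroot p q == g))
     delta_mx q p.

(* Conditions on r_0 = \sum_{i,j} R0 i j e_{ii} (x) e_{jj}: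
   r_0 in h (x) h (h = traceless diagonal matrices),
   r_0 + r_0^{21} = Omega_0 = \sum_i e_{ii} (x) e_{ii} - 1/n I (x) I,
   (tau(alpha) (x) 1 + 1 (x) alpha)(r_0) = 0 for alpha in Gamma1. *)
Definition r0_ok (G1 : {set 'I_n}) (tau : 'I_n -> 'I_n) (R0 : 'M[F]_n) : Prop :=
  [/\ (forall j, \sum_(i : 'I_n) R0 i j = 0),
      (forall i, \sum_(j : 'I_n) R0 i j = 0),
      (forall i j, R0 i j + R0 j i = (i == j)%:R - n%:R^-1)
    & {in G1, forall m, forall l : 'I_n,
        \sum_(i : 'I_n) R0 i l * (alpha_eps (tau m) i)%:~R
        + \sum_(j : 'I_n) R0 l j * (alpha_eps m j)%:~R = 0}].

Definition r0_tensor (R0 : 'M[F]_n) : tensor F n :=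
  \sum_(i : 'I_n) \sum_(j : 'I_n) tens (R0 i j *: delta_mx i i) (delta_mx j j).

(* r_BD = r_0 + sum_{alpha>0} e_alpha (x) e_{-alpha}
          + sum_{beta in (Z Gamma1)^+} sum_{k>=1} e_beta /\ e_{-tau^k(beta)}.
   tau^k(beta) is undefined for k >= n (it needs |Gamma1| >= k), so the
   inner sum over k is taken over 1 <= k <= n. *)
Definition rBD (G1 : {set 'I_n}) (tau : 'I_n -> 'I_n) (R0 : 'M[F]_n) : tensor F n :=
  r0_tensor R0
  + \sum_(i : 'I_n) \sum_(j : 'I_n | (i < j)%N) tens (delta_mx i j) (delta_mx j i)
  + \sum_(i : 'I_n) \sum_(j : 'I_n | ((i < j)%N && in_lattice G1 (posroot i j)))
      \sum_(1 <= k < n.+1)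
        match tau_pow G1 tau k (posroot i j) with
        | Some g => wedge (delta_mx i j) (e_neg g)
        | None => 0
        end.

End BD.

Lemma Ad2_tens (F : fieldType) n (X A B : 'M[F]_n) :
  Ad2 X (tens A B) = tens (X *m A *m invmx X) (X *m B *m invmx X).
Proof.
apply/ffunP => -[[i j] [k l]]; rewrite !ffunE /=.
set Y := invmx X.
rewrite !mxE big_distrl /=.
under [in RHS]eq_bigr => b _ do rewrite mxE !big_distrl /=.
rewrite [in RHS]exchange_big /=; apply: eq_bigr => a _.
apply: eq_bigr => b _.
rewrite big_distrr /=.
under [in RHS]eq_bigr => d _ do rewrite mxE !big_distrl !big_distrr /=.
rewrite [in RHS]exchange_big /=; apply: eq_bigr => c _.
apply: eq_bigr => d _.
rewrite ffunE /=.
rewrite -!mulrA; congr (_ * _).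
rewrite [B c d * _]mulrC [RHS]mulrCA (mulrCA (A a b)) (mulrCA (A a b)).
by [].
Qed.

(* Main.v *)
Require Import Defs.
From HB Require Import structures.
From mathcomp Require Import all_boot all_order all_algebra all_field.
From mathcomp Require Import zify ring.
Set Implicit Arguments. Unset Strict Implicit. Unset Printing Implicit Defensive.
Import Order.TTheory GRing.Theory Num.Theory.
Local Open Scope ring_scope.

Lemma iter_comm (T : Type) (f g : T -> T) k x :
  (forall y, f (g y) = g (f y)) -> iter k f (g x) = g (iter k f x).
Proof. by move=> H; elim: k => //= k ->; rewrite H. Qed.

Lemma coprime_iter (V : zmodType) (A : V -> V) :
  (forall x y, A (x - y) = A x - A y) ->
  forall a b w, iter a A w = 0 -> iter b (fun v => A v - v) w = 0 -> w = 0.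
Proof.
move=> Aadd.
have A0 : A 0 = 0 by move: (Aadd 0 0); rewrite !subrr.
set S := fun v => A v - v.
have S0 : S 0 = 0 by rewrite /S A0 subrr.
have AS : forall y, A (S y) = S (A y) by move=> y; rewrite /S Aadd.
elim=> [|a IHa] b w; first by move=> /= ->.
elim: b w => [|b IHb] w; first by move=> _ /= ->.
move=> Ha Hb.
have Aw : A w = 0.
  apply: (IHa b.+1); first by rewrite -iterSr.
  by rewrite (iter_comm _ _ (fun y => esym (AS y))) Hb A0.
have Sw : S w = 0.
  apply: IHb; last by rewrite -iterSr.
  by rewrite (iter_comm _ _ AS) Ha S0.
by move: Sw; rewrite /S Aw sub0r => /eqP; rewrite oppr_eq0 => /eqP.
Qed.

Lemma tri_lemma (F : fieldType) n (X Z : 'M[F]_n) :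
  Z *m X = 1 ->
  (forall a b : 'I_n, (a < b)%N -> forall c d : 'I_n, (d <= c)%N ->
      (X *m delta_mx a b *m Z) c d = 0) ->
  forall c d : 'I_n, (d < c)%N -> X c d = 0.
Proof.
move=> ZX H.
suff: forall k (c d : 'I_n), (n - k <= c)%N -> (d < c)%N -> X c d = 0.
  by move=> Hk c d; apply: (Hk n); rewrite subnn.
elim=> [|k IHk] c d Hc Hdc.
  by move: (ltn_ord c); rewrite ltnNge; move: Hc; rewrite subn0 => ->.
have E : (X *m delta_mx d c *m Z) *m X = X *m delta_mx d c.
  by rewrite -mulmxA ZX mulmx1.
have := congr1 (fun M : 'M[F]_n => M c c) E.
rewrite mxE [RHS]mxE.
have R1 : \sum_j X c j * delta_mx d c j c = X c d.
  rewrite (bigD1 d) //= big1 ?addr0; last first.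
    by move=> j Hj; rewrite mxE (negbTE Hj) andFb mulr0.
  by rewrite mxE !eqxx mulr1.
rewrite R1 => <-.
apply: big1 => e _.
case: (leqP e c) => Hec.
  by rewrite (H d c Hdc c e Hec) mul0r.
rewrite (IHk e c) ?mulr0 //.
lia.
Qed.
Section Tau.
Variables (n : nat) (G1 : {set 'I_n}) (tau : 'I_n -> 'I_n).

Lemma tau_pow_add k K c :
  tau_pow G1 tau (k + K) c = obind (tau_pow G1 tau K) (tau_pow G1 tau k c).
Proof.
elim: K => [|K IH] /=; first by rewrite addn0; case: (tau_pow _ _ _ _).
rewrite addnS /= IH; by case: (tau_pow G1 tau k c).
Qed.

Lemma pos_chain (c : {ffun 'I_n -> int}) m0 :
  (forall m, 0 <= c m) -> 0 < c m0 ->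
  forall K g, tau_pow G1 tau K c = Some g ->
  [/\ forall m, 0 <= g m, 0 < g (iter K tau m0) &
      forall t, (t < K)%N -> iter t tau m0 \in G1].
Proof.
move=> c0 cm0; elim=> [|K IH] g /=; first by case=> <-.
case E: (tau_pow G1 tau K c) => [d|] //.
case L: (in_lattice G1 d) => //= -[<-].
have [d0 dm Hch] := IH d E.
have inG : iter K tau m0 \in G1.
  move/forallP: L => /(_ (iter K tau m0)) /implyP; apply.
  by rewrite gt_eqF.
split.
- move=> m; rewrite ffunE; apply: sumr_ge0 => i _; exact: d0.
- rewrite ffunE (bigD1 (iter K tau m0)) /=; last by rewrite inG eqxx.
  apply: (lt_le_trans dm); rewrite lerDl; apply: sumr_ge0 => i _; exact: d0.
- move=> t; rewrite ltnS leq_eqVlt => /orP [/eqP -> //|]; exact: Hch.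
Qed.

Lemma exit_bound :
  {in G1, forall a, exists k, iter k tau a \notin G1} ->
  exists K0, forall m : 'I_n, exists2 t, (t < K0)%N & iter t tau m \notin G1.
Proof.
move=> Hex.
suff: forall s : seq 'I_n, exists K0, forall m, m \in s ->
        exists2 t, (t < K0)%N & iter t tau m \notin G1.
  by case/(_ (enum 'I_n)) => K0 HK; exists K0 => m; apply: HK; rewrite mem_enum.
elim=> [|m s [K0 HK]]; first by exists 0%N.
have [t Ht] : exists t, iter t tau m \notin G1.
  case: (boolP (m \in G1)) => Hm; first exact: Hex.
  by exists 0%N.
exists (maxn K0 t.+1) => m'; rewrite inE => /orP [/eqP ->|Hm'].
  by exists t => //; rewrite leq_max ltnSn orbT.
have [t' Ht' H'] := HK m' Hm'; exists t' => //.
by rewrite leq_max Ht'.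
Qed.

Lemma posroot_bound K0 (i j : 'I_n) :
  (forall m : 'I_n, exists2 t, (t < K0)%N & iter t tau m \notin G1) ->
  (i < j)%N -> forall K g, tau_pow G1 tau K (posroot i j) = Some g -> (K < K0)%N.
Proof.
move=> HK0 ij K g Hg.
have [_ _ Hch] := pos_chain (c := posroot i j) (m0 := i) (fun m => ltac:(by rewrite /posroot ffunE)) 
   (ltac:(by rewrite /posroot ffunE leqnn ij)) Hg.
have [t Ht Hn] := HK0 i.
rewrite ltnNge; apply/negP => HK.
by move: Hn; rewrite Hch // (leq_trans Ht HK).
Qed.

Definition Dep K0 (c : {ffun 'I_n -> int}) : nat :=
  \max_(K < K0 | tau_pow G1 tau K c != None) K.

Lemma Dep_lt K0 c k g :
  (forall K g, tau_pow G1 tau K c = Some g -> (K < K0)%N) ->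
  (0 < k)%N -> tau_pow G1 tau k c = Some g -> (Dep K0 g < Dep K0 c)%N.
Proof.
move=> Hb k0 Hg.
have kK0 : (k < K0)%N by exact: Hb Hg.
have kD : (k <= Dep K0 c)%N.
  by apply: (@leq_bigmax_cond _ _ (fun K : 'I_K0 => nat_of_ord K) (Ordinal kK0)); rewrite /= Hg.
have : (Dep K0 g <= Dep K0 c - k)%N.
  apply/bigmax_leqP => K HK.
  have E : tau_pow G1 tau (k + K) c = tau_pow G1 tau K g by rewrite tau_pow_add Hg.
  case E2: (tau_pow G1 tau K g) HK => [g'|] // _.
  rewrite E2 in E.
  have kKK0 : (k + K < K0)%N by exact: Hb E.
  have : (k + K <= Dep K0 c)%N.
    by apply: (@leq_bigmax_cond _ _ (fun K : 'I_K0 => nat_of_ord K) (Ordinal kKK0)); rewrite /= E.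
  lia.
lia.
Qed.
End Tau.
Section Rop.
Variables (F : fieldType) (n : nat).

Definition Rop (T : tensor F n) (Y : 'M[F]_n) : 'M[F]_n :=
  \matrix_(a, b) \sum_(c : 'I_n) \sum_(d : 'I_n) T ((a, b), (c, d)) * Y d c.

Lemma RopB T Y1 Y2 : Rop T (Y1 - Y2) = Rop T Y1 - Rop T Y2.
Proof.
apply/matrixP => a b; rewrite !mxE -sumrB; apply: eq_bigr => c _.
rewrite -sumrB; apply: eq_bigr => d _; by rewrite !mxE mulrBr.
Qed.

Lemma Rop_Ad (X : 'M[F]_n) T W :
  Rop (Ad2 X T) W = X *m Rop T (invmx X *m W *m X) *m invmx X.
Proof.
set Z := invmx X.
apply/matrixP => a b; rewrite !mxE.
transitivity (\sum_(a' : 'I_n) \sum_(b' : 'I_n) \sum_(c' : 'I_n) \sum_(d' : 'I_n)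
   \sum_(c : 'I_n) \sum_(d : 'I_n)
   X a a' * Z b' b * X c c' * Z d' d * T ((a', b'), (c', d')) * W d c).
  under eq_bigr => c _ do under eq_bigr => d _ do rewrite ffunE /=.
  do 4! (under eq_bigr => ? _ do under eq_bigr => ? _ do rewrite big_distrl;
    under eq_bigr => ? _ do rewrite exchange_big; rewrite [LHS]exchange_big;
    apply: eq_bigr => ? _).
  by [].
under [RHS]eq_bigr => j _ do rewrite mxE big_distrl.
rewrite [RHS]exchange_big; apply: eq_bigr => a' _; apply: eq_bigr => b' _ /=.
rewrite mxE big_distrr big_distrl; apply: eq_bigr => c' _ /=.
rewrite big_distrr big_distrl; apply: eq_bigr => d' _ /=.
rewrite mxE big_distrr big_distrr big_distrl; apply: eq_bigr => c _ /=.
rewrite mxE big_distrl !big_distrr big_distrl; apply: eq_bigr => d _ /=.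
ring.
Qed.
End Rop.
Lemma sum_neq0P (R : zmodType) (I : eqType) (r : seq I) (Q : pred I) (f : I -> R)
    (P : Prop) :
  (forall i, i \in r -> Q i -> f i != 0 -> P) -> \sum_(i <- r | Q i) f i != 0 -> P.
Proof.
elim: r => [|x r IH] H; first by rewrite big_nil eqxx.
rewrite big_cons; case: ifP => Qx.
  case: (eqVneq (f x) 0) => [->|fx]; last by move=> _; apply: (H x) => //; rewrite inE eqxx.
  by rewrite add0r; apply: IH => i ir; apply: H; rewrite inE ir orbT.
by apply: IH => i ir; apply: H; rewrite inE ir orbT.
Qed.

Lemma add_neq0P (R : zmodType) (x y : R) : x + y != 0 -> x != 0 \/ y != 0.
Proof.
case: (eqVneq x 0) => [->|]; last by left.
by rewrite add0r; right.
Qed.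

Section Coef.
Variables (F : fieldType) (n : nat) (G1 : {set 'I_n}) (tau : 'I_n -> 'I_n) (R0 : 'M[F]_n).

Lemma e_neg_entry g (x y : 'I_n) :
  e_neg F g x y != 0 -> (y < x)%N /\ posroot y x = g.
Proof.
rewrite /e_neg summxE; apply: sum_neq0P => p _ _.
rewrite summxE; apply: sum_neq0P => q _ /andP [pq /eqP pg].
rewrite mxE; case: (eqVneq x q) => [->|]; last by rewrite /= ?(mulr0, mul0r, andbF, mulr0n, oppr0) eqxx.
by case: (eqVneq y p) => [->|]; last by rewrite andbF /= mulr0n eqxx.
Qed.

Definition Wpart : tensor F n :=
  \sum_(i : 'I_n) \sum_(j : 'I_n | ((i < j)%N && in_lattice G1 (posroot i j)))
      \sum_(1 <= k < n.+1)
        match tau_pow G1 tau k (posroot i j) with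
        | Some g => wedge (delta_mx i j) (e_neg F g)
        | None => 0
        end.

Definition Mpart : tensor F n :=
  \sum_(i : 'I_n) \sum_(j : 'I_n | (i < j)%N) tens (delta_mx i j) (delta_mx j i).

Lemma rBD_split : rBD G1 tau R0 = r0_tensor R0 + Mpart + Wpart.
Proof. by []. Qed.

Lemma r0_coef (a b c d : 'I_n) :
  r0_tensor R0 ((a, b), (c, d)) != 0 -> a = b /\ c = d.
Proof.
rewrite /r0_tensor sum_ffunE; apply: sum_neq0P => i _ _.
rewrite sum_ffunE; apply: sum_neq0P => j _ _.
rewrite ffunE !mxE /=.
case: (eqVneq a i) => [->|]; last by rewrite /= ?(mulr0, mul0r, andbF, mulr0n, oppr0) eqxx.
case: (eqVneq b i) => [->|]; last by rewrite /= ?(mulr0, mul0r, andbF, mulr0n, oppr0) eqxx.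
case: (eqVneq c j) => [->|]; last by rewrite /= ?(mulr0, mul0r, andbF, mulr0n, oppr0) eqxx.
by case: (eqVneq d j) => [->|]; last by rewrite /= ?(mulr0, mul0r, andbF, mulr0n, oppr0) eqxx.
Qed.

Lemma M_coef (a b c d : 'I_n) :
  Mpart ((a, b), (c, d)) = ((a < b)%N && (c == b) && (d == a))%:R.
Proof.
rewrite /Mpart sum_ffunE (bigD1 a) //= [X in _ + X]big1 ?addr0; last first.
  move=> i ia; rewrite sum_ffunE big1 // => j _.
  by rewrite ffunE !mxE /= eq_sym (negbTE ia) /= mul0r.
rewrite sum_ffunE.
case: (ltnP a b) => ab /=.
  rewrite (bigD1 b) //= [X in _ + X]big1 ?addr0; last first.
    move=> j /andP [_ jb]; rewrite ffunE !mxE /= eqxx /= eq_sym (negbTE jb) /= mul0r.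
    by [].
  rewrite ffunE !mxE /= !eqxx /= mul1r.
  by case: (c == b); case: (d == a).
apply: big1 => j aj; rewrite ffunE !mxE /=.
case: (eqVneq b j) => [bj|]; last by rewrite andbF /= mul0r.
by move: aj ab; rewrite bj => aj ab; have := leq_trans aj ab; rewrite ltnn.
Qed.

Lemma W_coef (a b c d : 'I_n) :
  Wpart ((a, b), (c, d)) != 0 ->
  ((a < b)%N /\ (d < c)%N /\
      exists2 k, (0 < k)%N & tau_pow G1 tau k (posroot a b) = Some (posroot d c))
  \/ ((b < a)%N /\ (c < d)%N /\
      exists2 k, (0 < k)%N & tau_pow G1 tau k (posroot c d) = Some (posroot b a)).
Proof.
rewrite /Wpart sum_ffunE; apply: sum_neq0P => i _ _.
rewrite sum_ffunE; apply: sum_neq0P => j _ /andP [ij _].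
rewrite sum_ffunE; apply: sum_neq0P => k; rewrite mem_index_iota => /andP [k1 _] _.
case E: (tau_pow G1 tau k (posroot i j)) => [g|]; last by rewrite ffunE eqxx.
rewrite !ffunE !mxE /= => /add_neq0P [H|H].
- left.
  case: (eqVneq a i) H => [->|]; last by rewrite /= ?(mulr0, mul0r, andbF, mulr0n, oppr0) eqxx.
  case: (eqVneq b j) => [->|]; last by rewrite /= ?(mulr0, mul0r, andbF, mulr0n, oppr0) eqxx.
  rewrite /= mul1r => /e_neg_entry [dc Hg].
  by split=> //; split=> //; exists k => //; rewrite E Hg.
- right.
  move: H; rewrite oppr_eq0.
  case: (eqVneq c i) => [->|]; last by rewrite /= ?(mulr0, mul0r, andbF, mulr0n, oppr0) eqxx.
  case: (eqVneq d j) => [->|]; last by rewrite /= ?(mulr0, mul0r, andbF, mulr0n, oppr0) eqxx.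
  rewrite /= mulr1 => /e_neg_entry [ba Hg].
  by split=> //; split=> //; exists k => //; rewrite E Hg.
Qed.

End Coef.
Section Main.
Variables (F : fieldType) (n : nat) (G1 : {set 'I_n}) (tau : 'I_n -> 'I_n) (R0 : 'M[F]_n).
Variable K0 : nat.
Hypothesis HK0 : forall m : 'I_n, exists2 t, (t < K0)%N & iter t tau m \notin G1.

Let T := rBD G1 tau R0.
Let D (p q : 'I_n) := Dep G1 tau K0 (posroot p q).

Lemma D_le p q : (D p q <= K0)%N.
Proof. by apply/bigmax_leqP => K _; apply: ltnW. Qed.

Lemma D_lt (a b c d : 'I_n) k :
  (a < b)%N -> (0 < k)%N -> tau_pow G1 tau k (posroot a b) = Some (posroot c d) ->
  (D c d < D a b)%N.
Proof. move=> ab k0 E; apply: (Dep_lt _ k0 E); exact: posroot_bound. Qed.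

Lemma T_cases (a b c d : 'I_n) :
  T ((a, b), (c, d)) != 0 ->
  [\/ a = b /\ c = d,
      [/\ (a < b)%N, c = b & d = a],
      (a < b)%N /\ (d < c)%N /\
        exists2 k, (0 < k)%N & tau_pow G1 tau k (posroot a b) = Some (posroot d c)
    | (b < a)%N /\ (c < d)%N /\
        exists2 k, (0 < k)%N & tau_pow G1 tau k (posroot c d) = Some (posroot b a)].
Proof.
rewrite /T rBD_split !ffunE => /add_neq0P [/add_neq0P [H|H]|H].
- by constructor 1; apply: r0_coef H.
- constructor 2; move: H; rewrite M_coef.
  case: ltnP => ab; last by rewrite /= mulr0n eqxx.
  case: (c =P b) => [->|_]; last by rewrite /= ?andbF ?mulr0n ?eqxx.
  by case: (d =P a) => [->|_]; last by rewrite /= ?andbF ?mulr0n ?eqxx.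
- by case: (W_coef H) => H'; [constructor 3 | constructor 4].
Qed.

Lemma T_supp (a b c d : 'I_n) :
  T ((a, b), (c, d)) != 0 -> ((b < a)%N = (c < d)%N) /\ ((a < b)%N = (d < c)%N).
Proof.
case/T_cases => [[-> ->]|[ab -> ->]|[ab [dc _]]|[ba [cd _]]]; rewrite ?ltnn //.
- by split; apply/idP/idP => H; lia.
- by split; apply/idP/idP => H; lia.
Qed.

Definition Ld d (Y : 'M[F]_n) :=
  forall a b, Y a b != 0 -> (b < a)%N /\ (D b a < d)%N.
Definition Ud d (Y : 'M[F]_n) :=
  forall a b, Y a b != 0 -> (a < b)%N /\ (d <= D a b)%N.

Lemma Ld_step d Y : Ld d.+1 Y -> Ld d (Rop T Y).
Proof.
move=> HY a b; rewrite mxE; apply: sum_neq0P => c _ _.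
apply: sum_neq0P => d' _ _; rewrite mulf_eq0 negb_or => /andP [HT HYv].
have [cd' HD] := HY _ _ HYv.
case/T_cases: HT => [[_ E]|[ab E1 E2]|[_ [dc _]]|[ba [_ [k k0 E]]]].
- by move: cd'; rewrite E ltnn.
- by move: cd'; rewrite E1 E2 => ba; move: (ltn_trans ab ba); rewrite ltnn.
- by move: (ltn_trans cd' dc); rewrite ltnn.
- by split=> //; apply: leq_trans (D_lt cd' k0 E) HD.
Qed.

Lemma Ud_step d Y : Ud d Y -> Ud d.+1 (Rop T Y - Y).
Proof.
move=> HY a b; rewrite !mxE.
case: (ltnP a b) => ab; last first.
  have -> : Y a b = 0.
    by apply/eqP; apply: contraTT ab => /HY [ab _]; rewrite -ltnNge.
  rewrite subr0; apply: sum_neq0P => c _ _; apply: sum_neq0P => d' _ _.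
  rewrite mulf_eq0 negb_or => /andP [HT HYv].
  have [dc _] := HY _ _ HYv.
  case/T_cases: HT => [[_ E]|[ab' _ _]|[ab' _]|[_ [cd _]]].
  - by move: dc; rewrite E ltnn.
  - by move: ab; rewrite leqNgt ab'.
  - by move: ab; rewrite leqNgt ab'.
  - by move: (ltn_trans cd dc); rewrite ltnn.
have EY : Y a b = \sum_(c : 'I_n) \sum_(d' : 'I_n) Mpart F n ((a, b), (c, d')) * Y d' c.
  rewrite (bigD1 b) //= [X in _ + X]big1 ?addr0; last first.
    move=> c cb; apply: big1 => d' _; by rewrite M_coef (negbTE cb) andbF mul0r.
  rewrite (bigD1 a) //= [X in _ + X]big1 ?addr0; last first.
    move=> d' da; by rewrite M_coef (negbTE da) andbF mul0r.
  by rewrite M_coef ab !eqxx mul1r.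
rewrite EY -sumrB; apply: sum_neq0P => c _ _; rewrite -sumrB.
apply: sum_neq0P => d' _ _; rewrite -mulrBl mulf_eq0 negb_or => /andP [HT HYv].
have [dc HD] := HY _ _ HYv.
move: HT; rewrite /T rBD_split !ffunE addrAC addrK => /add_neq0P [H|H].
  by have [E _] := r0_coef H; move: ab; rewrite E ltnn.
case: (W_coef H) => [[_ [_ [k k0 E]]]|[ba _]].
  by split=> //; exact: leq_ltn_trans HD (D_lt ab k0 E).
by move: (ltn_trans ab ba); rewrite ltnn.
Qed.


Let R := Rop T.
Let S := fun Y : 'M[F]_n => R Y - Y.

Lemma R_nil (Y : 'M[F]_n) : (forall a b : 'I_n, (a <= b)%N -> Y a b = 0) -> iter K0.+1 R Y = 0.
Proof.
move=> HY.
suff: forall d Y, Ld d Y -> iter d R Y = 0.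
  apply => a b Hab; split.
    by rewrite ltnNge; apply: contra Hab => /HY ->.
  by rewrite ltnS D_le.
elim=> [|d IH] Y' HY'.
  apply/matrixP => a b; rewrite mxE /=; apply/eqP/negP => /negP /HY' [_].
  by rewrite ltn0.
by rewrite iterSr; apply: IH; apply: Ld_step.
Qed.

Lemma Ud_weak d d' (Y : 'M[F]_n) : (d' <= d)%N -> Ud d Y -> Ud d' Y.
Proof. by move=> dd HY a b /HY [ab H]; split=> //; apply: leq_trans dd H. Qed.

Lemma S_nil (Y : 'M[F]_n) : (forall a b : 'I_n, (b <= a)%N -> Y a b = 0) -> iter K0.+1 S Y = 0.
Proof.
move=> HY.
suff: forall m Y, Ud (K0.+1 - m) Y -> iter m S Y = 0.
  apply => a b Hab; split; last by rewrite subnn.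
  by rewrite ltnNge; apply: contra Hab => /HY ->.
elim=> [|m IH] Y' HY'.
  apply/matrixP => a b; rewrite mxE /=; apply/eqP/negP => /negP /HY' [_].
  by rewrite subn0 leqNgt ltnS D_le.
rewrite iterSr; apply: IH; apply: (Ud_weak _ (Ud_step HY')); lia.
Qed.

Definition lowp (Y : 'M[F]_n) : 'M[F]_n := \matrix_(a, b) if (b < a)%N then Y a b else 0.
Definition upp (Y : 'M[F]_n) : 'M[F]_n := \matrix_(a, b) if (a < b)%N then Y a b else 0.

Lemma lowpB (Y1 Y2 : 'M[F]_n) : lowp (Y1 - Y2) = lowp Y1 - lowp Y2.
Proof. by apply/matrixP => a b; rewrite !mxE; case: ifP; rewrite ?subr0. Qed.
Lemma uppB (Y1 Y2 : 'M[F]_n) : upp (Y1 - Y2) = upp Y1 - upp Y2.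
Proof. by apply/matrixP => a b; rewrite !mxE; case: ifP; rewrite ?subr0. Qed.

Lemma lowp_R (Y : 'M[F]_n) : lowp (R Y) = R (lowp Y).
Proof.
apply/matrixP => a b; rewrite !mxE.
case: ifP => ba.
  apply: eq_bigr => c _; apply: eq_bigr => d _; rewrite mxE.
  case: (eqVneq (T ((a, b), (c, d))) 0) => [->|HT]; first by rewrite !mul0r.
  by have [<- _] := T_supp HT; rewrite ba.
symmetry; apply: big1 => c _; apply: big1 => d _; rewrite mxE.
case: (eqVneq (T ((a, b), (c, d))) 0) => [->|HT]; first by rewrite !mul0r.
by have [<- _] := T_supp HT; rewrite ba mulr0.
Qed.

Lemma upp_R (Y : 'M[F]_n) : upp (R Y) = R (upp Y).
Proof.
apply/matrixP => a b; rewrite !mxE.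
case: ifP => ab.
  apply: eq_bigr => c _; apply: eq_bigr => d _; rewrite mxE.
  case: (eqVneq (T ((a, b), (c, d))) 0) => [->|HT]; first by rewrite !mul0r.
  by have [_ <-] := T_supp HT; rewrite ab.
symmetry; apply: big1 => c _; apply: big1 => d _; rewrite mxE.
case: (eqVneq (T ((a, b), (c, d))) 0) => [->|HT]; first by rewrite !mul0r.
by have [_ <-] := T_supp HT; rewrite ab mulr0.
Qed.

Lemma lowp_S (Y : 'M[F]_n) : lowp (S Y) = S (lowp Y).
Proof. by rewrite /S lowpB lowp_R. Qed.
Lemma upp_S (Y : 'M[F]_n) : upp (S Y) = S (upp Y).
Proof. by rewrite /S uppB upp_R. Qed.

Lemma R_add : forall x y, R (x - y) = R x - R y.
Proof. by move=> x y; rewrite /R RopB. Qed.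

Lemma diag_sq0 (z : 'M[F]_n) c :
  z *m z = 0 ->
  ((forall a b : 'I_n, (b < a)%N -> z a b = 0) \/
   (forall a b : 'I_n, (a < b)%N -> z a b = 0)) -> z c c = 0.
Proof.
move=> zz Hz.
have : (z *m z) c c = z c c * z c c.
  rewrite mxE (bigD1 c) //= big1 ?addr0 // => e ec.
  case: (ltngtP e c) => H; last by move/val_inj: H ec => ->; rewrite eqxx.
  - case: Hz => Hz; first by rewrite (Hz c e H) mul0r.
    by rewrite (Hz e c H) mulr0.
  - case: Hz => Hz; first by rewrite (Hz e c H) mulr0.
    by rewrite (Hz c e H) mul0r.
by rewrite zz mxE => /esym /eqP; rewrite mulf_eq0 orbb => /eqP.
Qed.

Lemma conj_pres (P Q : 'M[F]_n) :
  Q *m P = 1 -> P *m Q = 1 ->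
  (forall W, R (P *m W *m Q) = P *m R W *m Q) ->
  (forall a b : 'I_n, (a < b)%N -> forall c d : 'I_n, (d <= c)%N ->
      (P *m delta_mx a b *m Q) c d = 0) /\
  (forall a b : 'I_n, (b < a)%N -> forall c d : 'I_n, (c <= d)%N ->
      (P *m delta_mx a b *m Q) c d = 0).
Proof.
move=> QP PQ HR.
have HS : forall W, S (P *m W *m Q) = P *m S W *m Q.
  by move=> W; rewrite /S HR mulmxBr mulmxBl.
have iterR : forall k W, iter k R (P *m W *m Q) = P *m iter k R W *m Q.
  by elim=> // k IH W /=; rewrite IH HR.
have iterS : forall k W, iter k S (P *m W *m Q) = P *m iter k S W *m Q.
  by elim=> // k IH W /=; rewrite IH HS.
have zz : forall a b : 'I_n, a != b ->
    (P *m delta_mx a b *m Q) *m (P *m delta_mx a b *m Q) = 0.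
  move=> a b ab; rewrite -!mulmxA (mulmxA Q) QP mul1mx (mulmxA (delta_mx a b)).
  by rewrite mul_delta_mx_cond eq_sym (negbTE ab) mulr0n !(mul0mx, mulmx0).
split.
- move=> a b ab.
  set z := P *m delta_mx a b *m Q.
  have Sz : iter K0.+1 S z = 0.
    rewrite /z iterS S_nil ?mulmx0 ?mul0mx // => c d dc.
    by rewrite mxE; case: (eqVneq c a) => [ca|]; rewrite ?andbF //; 
       case: (eqVneq d b) => [db|] //=; move: dc; rewrite ca db leqNgt ab.
  have Hw : lowp z = 0.
    apply: (coprime_iter R_add (a := K0.+1) (b := K0.+1)).
      by apply: R_nil => c d cd; rewrite mxE ltnNge cd.
    rewrite (iter_comm _ _ (fun y => esym (lowp_S y))) Sz.
    by apply/matrixP => c d; rewrite !mxE; case: ifP.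
  have Hl : forall c d : 'I_n, (d < c)%N -> z c d = 0.
    by move=> c d dc; have := congr1 (fun M : 'M[F]_n => M c d) Hw; rewrite !mxE dc.
  move=> c d; rewrite leq_eqVlt => /orP [/eqP dc|]; last exact: Hl.
  rewrite -(val_inj dc) {dc}; apply: diag_sq0; last by left.
  by apply: zz; rewrite neq_ltn ab.
- move=> a b ba.
  set z := P *m delta_mx a b *m Q.
  have Rz : iter K0.+1 R z = 0.
    rewrite /z iterR R_nil ?mulmx0 ?mul0mx // => c d cd.
    by rewrite mxE; case: (eqVneq c a) => [ca|]; rewrite ?andbF //; 
       case: (eqVneq d b) => [db|] //=; move: cd; rewrite ca db leqNgt ba.
  have Hw : upp z = 0.
    apply: (coprime_iter R_add (a := K0.+1) (b := K0.+1)); last first.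
      by apply: S_nil => c d cd; rewrite mxE ltnNge cd.
    rewrite (iter_comm _ _ (fun y => esym (upp_R y))) Rz.
    by apply/matrixP => c d; rewrite !mxE; case: ifP.
  have Hl : forall c d : 'I_n, (c < d)%N -> z c d = 0.
    by move=> c d dc; have := congr1 (fun M : 'M[F]_n => M c d) Hw; rewrite !mxE dc.
  move=> c d; rewrite leq_eqVlt => /orP [/eqP dc|]; last exact: Hl.
  rewrite -(val_inj dc) {dc}; apply: diag_sq0; last by right.
  by apply: zz; rewrite neq_ltn ba orbT.
Qed.

End Main.

Lemma equiv_from_Ad (F : fieldType) n (X : 'M[F]_n) (T : tensor F n) :
  X \in unitmx -> Ad2 X T = T ->
  (forall W, Rop T (X *m W *m invmx X) = X *m Rop T W *m invmx X) /\
  (forall W, Rop T (invmx X *m W *m X) = invmx X *m Rop T W *m X).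
Proof.
move=> Xu HT; split => W.
  have := Rop_Ad X T (X *m W *m invmx X); rewrite HT => ->.
  by rewrite !mulmxA (mulVmx Xu) mul1mx -(mulmxA W) (mulVmx Xu) mulmx1.
have := Rop_Ad X T W; rewrite HT => ->.
by rewrite !mulmxA (mulVmx Xu) mul1mx -[RHS]mulmxA (mulVmx Xu) mulmx1.
Qed.

Unset Implicit Arguments.
Set Strict Implicit.

Theorem mainTheorem7 (F : closedFieldType) (n : nat)
    (G1 G2 : {set 'I_n}) (tau : 'I_n -> 'I_n) (R0 : 'M[F]_n) :
  [pchar F] =i pred0 ->
  (1 < n)%N ->
  admissible G1 G2 tau ->
  r0_ok G1 tau R0 ->
  forall X : 'M[F]_n, Cstab (rBD G1 tau R0) X -> is_diag_mx X.
Proof.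
move=> _ _ [_ _ _ _ Hex] _ X [Xu HT].
have [K0 HK0] := exit_bound Hex.
set Z := invmx X.
have ZX : Z *m X = 1 by rewrite /Z mulVmx.
have XZ : X *m Z = 1 by rewrite /Z mulmxV.
have [HRX HRZ] := equiv_from_Ad Xu HT.
have [up1 _] := conj_pres HK0 ZX XZ HRX.
have [_ low2] := conj_pres HK0 XZ ZX HRZ.
have U := tri_lemma ZX up1.
have L : forall c d : 'I_n, (d < c)%N -> X^T c d = 0.
  apply: (tri_lemma (Z := Z^T)); first by rewrite -trmx_mul XZ trmx1.
  move=> a b ab c d dc.
  rewrite -trmx_delta -!trmx_mul mulmxA mxE.
  exact: low2.
apply/forallP => i; apply/forallP => j; apply/implyP => ij; apply/eqP.
case: (ltngtP i j) => H.
- by have := L j i H; rewrite mxE.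
- exact: U.
- by rewrite H eqxx in ij.
Qed.
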